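(* Let $N_1>0$, $N_2>0$, $\chi>0$ and set $\alpha=\pi\big(\sqrt{N_2/\pi}+N_1/2\big)^2$, $\beta=\alpha/\sqrt{\pi N_2}$, $\tau=\sqrt{\pi N_2}\,N_1$, $\rho=1+N_2/\tau$ (so $\rho>1$). Define on $(0,1/\rho)$ $$S(\phi)=\frac{\phi}{\tau}\ln\frac{\alpha\phi}{\tau}+\frac{\phi}{N_1}\ln\frac{\beta\phi}{\tau}+(1-\rho\phi)\ln(1-\rho\phi),\qquad H(\phi)=\chi\phi(1-\rho\phi),$$ and $\kappa(\phi)=\dfrac{1}{36\phi(1-\phi)}$. Then: (1) $S$ and $-H$ are both convex on $(0,1/\rho)$; (2) $K(u,v):=\kappa(u)v^2$ is convex on $(0,1/\rho)\times\mathbb{R}$; (3) $K_1(u,v):=\big(\kappa(u)-\tfrac{1}{36}\big)v^2$ is convex on $(0,1/\rho)\times\mathbb{R}$ and $K_2(v):=\tfrac{1}{36}v^2$ is convex on $\mathbb{R}$. *)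

(* Defs.v *)
From mathcomp Require Import all_boot all_order all_algebra.
From mathcomp Require Import all_classical all_reals all_analysis.

Set Implicit Arguments.
Unset Strict Implicit.
Unset Printing Implicit Defensive.

Import Order.TTheory GRing.Theory Num.Theory.
Local Open Scope ring_scope.
Local Open Scope classical_set_scope.

Section defs.
Variables (R : realType) (N1 N2 chi : R).

Definition alpha : R := pi * (Num.sqrt (N2 / pi) + N1 / 2) ^+ 2.
Definition beta : R := alpha / Num.sqrt (pi * N2).
Definition tau : R := Num.sqrt (pi * N2) * N1.
Definition rho : R := 1 + N2 / tau.

Definition S (phi : R) : R :=
  phi / tau * ln (alpha * phi / tau)
  + phi / N1 * ln (beta * phi / tau)
  + (1 - rho * phi) * ln (1 - rho * phi).

Definition H (phi : R) : R := chi * phi * (1 - rho * phi).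

End defs.

Definition kappa (R : realType) (phi : R) : R := (36 * phi * (1 - phi))^-1.

Definition K (R : realType) (p : R * R) : R := kappa p.1 * p.2 ^+ 2.
Definition K1 (R : realType) (p : R * R) : R := (kappa p.1 - 36^-1) * p.2 ^+ 2.
Definition K2 (R : realType) (v : R) : R := 36^-1 * v ^+ 2.

(* Main.v *)
Require Import Defs.
From mathcomp Require Import all_boot all_order all_algebra.
From mathcomp Require Import all_classical all_reals all_analysis.
From mathcomp Require Import ring lra.
Import Order.TTheory GRing.Theory Num.Theory.
Local Open Scope ring_scope.
Local Open Scope classical_set_scope.
Set Implicit Arguments.
Unset Strict Implicit.

Section Lem.
Variable R : realType.
Implicit Types x y z t u v : R.
Lemma ln_le_sub1 (x : R) : 0 < x -> ln x <= x - 1.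
Proof.
move=> x0; have := expR_ge1Dx (ln x); rewrite lnK ?posrE //; lra.
Qed.

Lemma xlnx_tangent (x z : R) : 0 < x -> 0 < z ->
  z * ln z + (ln z + 1) * (x - z) <= x * ln x.
Proof.
move=> x0 z0.
have h := ln_le_sub1 (divr_gt0 z0 x0).
rewrite ln_div ?posrE // in h.
have e : x * (z / x) = z by rewrite mulrCA divff ?mulr1 // gt_eqF.
have : x * (ln z - ln x) <= x * (z / x - 1) by rewrite ler_pM2l.
move: e; set w := z / x; move=> e; nra.
Qed.

Lemma xlnx_conv (x y t : R) : 0 < x -> 0 < y -> 0 <= t <= 1 ->
  (t * x + (1 - t) * y) * ln (t * x + (1 - t) * y) <= t * (x * ln x) + (1 - t) * (y * ln y).
Proof.
move=> x0 y0 /andP[t0 t1]; set z := t * x + (1 - t) * y.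
have z0 : 0 < z.
  rewrite /z; have [->|tp] := eqVneq t 0; first by rewrite mul0r add0r subr0 mul1r.
  have : 0 < t by rewrite lt_neqAle eq_sym tp.
  move=> tp'; rewrite ltr_pwDl ?mulr_gt0 ?mulr_ge0 //; lra.
have h1 := xlnx_tangent x0 z0. have h2 := xlnx_tangent y0 z0.
have := ler_wpM2l t0 h1. have : 0 <= 1 - t by lra. move=> t1'.
have := ler_wpM2l t1' h2.
have ez : t * (x - z) + (1 - t) * (y - z) = 0 by rewrite /z; ring.
nra.
Qed.

Lemma qol (v1 v2 w1 w2 t : R) : 0 < w1 -> 0 < w2 -> 0 <= t <= 1 ->
  (t * v1 + (1 - t) * v2) ^+ 2 / (t * w1 + (1 - t) * w2)
   <= t * (v1 ^+ 2 / w1) + (1 - t) * (v2 ^+ 2 / w2).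
Proof.
move=> w10 w20 /andP[t0 t1].
have W0 : 0 < t * w1 + (1 - t) * w2 by nra.
set a := v1 / w1; set b := v2 / w2.
have ea : v1 = a * w1 by rewrite /a divfK // gt_eqF.
have eb : v2 = b * w2 by rewrite /b divfK // gt_eqF.
have e1 : v1 ^+ 2 / w1 = a ^+ 2 * w1 by rewrite ea; field; rewrite gt_eqF.
have e2 : v2 ^+ 2 / w2 = b ^+ 2 * w2 by rewrite eb; field; rewrite gt_eqF.
rewrite e1 e2 ler_pdivrMr // ea eb.
have -> : (t * (a ^+ 2 * w1) + (1 - t) * (b ^+ 2 * w2)) * (t * w1 + (1 - t) * w2)
  = (t * (a * w1) + (1 - t) * (b * w2)) ^+ 2 + t * (1 - t) * w1 * w2 * (a - b) ^+ 2
  by ring.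
rewrite lerDl; apply: mulr_ge0; last exact: sqr_ge0.
by apply: mulr_ge0; [apply: mulr_ge0|]; [apply: mulr_ge0| |]; lra.
Qed.

Lemma quad_conv (w : R -> R) (P : R -> Prop) u1 u2 v1 v2 t :
  (forall u, P u -> 0 < w u) ->
  (forall u1 u2 t, P u1 -> P u2 -> 0 <= t <= 1 ->
     t * w u1 + (1 - t) * w u2 <= w (t * u1 + (1 - t) * u2)) ->
  P u1 -> P u2 -> 0 <= t <= 1 ->
  (t * v1 + (1 - t) * v2) ^+ 2 / w (t * u1 + (1 - t) * u2)
   <= t * (v1 ^+ 2 / w u1) + (1 - t) * (v2 ^+ 2 / w u2).
Proof.
move=> wpos wconc h1 h2 ht.
have w1 := wpos _ h1; have w2 := wpos _ h2.
have W0 : 0 < t * w u1 + (1 - t) * w u2 by case/andP: ht => ? ?; nra.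
apply: le_trans (qol v1 v2 w1 w2 ht).
apply: ler_wpM2l; first exact: sqr_ge0.
by rewrite lef_pV2 ?posrE ?(lt_le_trans W0) ?wconc.
Qed.

Definition psi (u : R) := (1 - u + u ^+ 2)^-1.

Lemma psi_tangent (x z : R) : 0 < x < 1 -> 0 < z < 1 ->
  psi x <= psi z + (1 - 2 * z) / (1 - z + z ^+ 2) ^+ 2 * (x - z).
Proof.
move=> /andP[x0 x1] /andP[z0 z1].
have qx : 0 < 1 - x + x ^+ 2 by nra.
have qz : 0 < 1 - z + z ^+ 2 by nra.
rewrite /psi.
have -> : (1 - z + z ^+ 2)^-1 + (1 - 2 * z) / (1 - z + z ^+ 2) ^+ 2 * (x - z)
  = ((1 - z + z ^+ 2) + (1 - 2 * z) * (x - z)) / (1 - z + z ^+ 2) ^+ 2.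
  by field; rewrite gt_eqF.
rewrite ler_pdivlMr ?exprn_gt0 // mulrC ler_pdivrMr //.
have -> : (1 - z + z ^+ 2 + (1 - 2 * z) * (x - z)) * (1 - x + x ^+ 2)
   = (1 - z + z ^+ 2) ^+ 2 + (x - z) ^+ 2 * (3 / 4 - (z - 1/2) * (z + 2 * x - 3/2)).
  by field.
rewrite lerDl; apply: mulr_ge0; first exact: sqr_ge0.
nra.
Qed.

Lemma psi_conc (x y t : R) : 0 < x < 1 -> 0 < y < 1 -> 0 <= t <= 1 ->
  t * psi x + (1 - t) * psi y <= psi (t * x + (1 - t) * y).
Proof.
move=> hx hy /andP[t0 t1].
have hz : 0 < t * x + (1 - t) * y < 1.
  case/andP: hx => ? ?; case/andP: hy => ? ?.
  have [->|tp] := eqVneq t 0; first by apply/andP; split; lra.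
  have : 0 < t by rewrite lt_neqAle eq_sym tp.
  move=> tp'; apply/andP; split; nra.
have h1 := psi_tangent hx hz; have h2 := psi_tangent hy hz.
set z := t * x + (1 - t) * y in h1 h2 *.
set d := (1 - 2 * z) / (1 - z + z ^+ 2) ^+ 2 in h1 h2.
have ez : t * (x - z) + (1 - t) * (y - z) = 0 by rewrite /z; ring.
have s0 : 0 <= 1 - t by lra.
have := ler_wpM2l t0 h1; have := ler_wpM2l s0 h2.
have : t * (psi z + d * (x - z)) + (1 - t) * (psi z + d * (y - z)) = psi z.
  have -> : t * (psi z + d * (x - z)) + (1 - t) * (psi z + d * (y - z)) =
     psi z + d * (t * (x - z) + (1 - t) * (y - z)) by ring.
  by rewrite ez mulr0 addr0.
lra.
Qed.


Lemma conv01 x y t : 0 < x < 1 -> 0 < y < 1 -> 0 <= t <= 1 ->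
  0 < t * x + (1 - t) * y < 1.
Proof.
move=> /andP[? ?] /andP[? ?] /andP[t0 t1].
have [->|tp] := eqVneq t 0; first by apply/andP; split; lra.
have : 0 < t by rewrite lt_neqAle eq_sym tp.
move=> tp'; apply/andP; split; nra.
Qed.

Lemma K1eq u v : 0 < u < 1 ->
  (kappa u - 36^-1) * v ^+ 2 = v ^+ 2 / (36 * (psi u - 1)).
Proof.
move=> /andP[u0 u1].
have q0 : 0 < 1 - u + u ^+ 2 by nra.
have e : psi u - 1 = u * (1 - u) / (1 - u + u ^+ 2).
  by rewrite /psi; field; rewrite gt_eqF.
rewrite e /kappa; field.
rewrite !gt_eqF //; try nra; lra.
Qed.

Lemma wK1_pos u : 0 < u < 1 -> 0 < 36 * (psi u - 1).
Proof.
move=> /andP[u0 u1].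
have q0 : 0 < 1 - u + u ^+ 2 by nra.
have e : psi u - 1 = u * (1 - u) / (1 - u + u ^+ 2).
  by rewrite /psi; field; rewrite gt_eqF.
rewrite e; apply: mulr_gt0; first lra.
apply: divr_gt0 => //; nra.
Qed.

Lemma K2conv x y t : 0 <= t <= 1 ->
  36^-1 * (t * x + (1 - t) * y) ^+ 2 <= t * (36^-1 * x ^+ 2) + (1 - t) * (36^-1 * y ^+ 2).
Proof.
move=> /andP[t0 t1].
have h : 0 <= 36^-1 * t * (1 - t) * (x - y) ^+ 2.
  apply: mulr_ge0; last exact: sqr_ge0.
  apply: mulr_ge0; last lra. by apply: mulr_ge0 => //; rewrite invr_ge0.
have -> : t * (36^-1 * x ^+ 2) + (1 - t) * (36^-1 * y ^+ 2) =
   36^-1 * (t * x + (1 - t) * y) ^+ 2 + 36^-1 * t * (1 - t) * (x - y) ^+ 2 by ring.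
by rewrite lerDl.
Qed.
End Lem.

Section Main.
Variables (R : realType) (N1 N2 chi : R).
Hypotheses (hN1 : 0 < N1) (hN2 : 0 < N2) (hchi : 0 < chi).

Lemma tau_gt0 : 0 < tau N1 N2.
Proof. by rewrite /tau mulr_gt0 // sqrtr_gt0 mulr_gt0 // pi_gt0. Qed.

Lemma alpha_gt0 : 0 < alpha N1 N2.
Proof.
rewrite /alpha mulr_gt0 ?pi_gt0 // exprn_gt0 // ltr_wpDl ?sqrtr_ge0 //.
by rewrite divr_gt0.
Qed.

Lemma beta_gt0 : 0 < beta N1 N2.
Proof. by rewrite /beta divr_gt0 ?alpha_gt0 // sqrtr_gt0 mulr_gt0 // pi_gt0. Qed.

Lemma rho_gt1 : 1 < rho N1 N2.
Proof. by rewrite /rho ltrDl divr_gt0 // tau_gt0. Qed.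

Lemma rhoV_lt1 : (rho N1 N2)^-1 < 1.
Proof. by rewrite invf_lt1 ?rho_gt1 // (lt_trans ltr01 rho_gt1). Qed.

End Main.


Theorem proposition3p1 (R : realType) (N1 N2 chi : R)
  (hN1 : 0 < N1) (hN2 : 0 < N2) (hchi : 0 < chi) :
  let D : set R^o := `]0, (rho N1 N2)^-1[%classic in
  let D2 : set (R^o * R^o)%type := `]0, (rho N1 N2)^-1[%classic `*` setT in
  [/\ convex_function (E := R^o) D (S N1 N2),
      convex_function (E := R^o) D (fun x => - H N1 N2 chi x),
      convex_function (E := (R^o * R^o)%type) D2 (@K R),
      convex_function (E := (R^o * R^o)%type) D2 (@K1 R)
    & convex_function (E := R^o) setT (@K2 R)].
Proof.
move=> D D2.
have ta := tau_gt0 hN1 hN2; have al := alpha_gt0 N2 hN1.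
have be := beta_gt0 hN1 hN2; have rh := rho_gt1 hN1 hN2.
have rV := rhoV_lt1 hN1 hN2.
set rho := rho N1 N2 in rh rV *.
have rhox : forall x, x < rho^-1 -> rho * x < 1.
  move=> x xr; rewrite -(mulfV (x:=rho)) ?gt_eqF ?(lt_trans ltr01) //.
  by rewrite ltr_pM2l // (lt_trans ltr01).
split.
- move=> t x y; rewrite /D !inE /= => hx hy.
  have /andP[x0 xr] : 0 < x < rho^-1 by exact: hx.
  have /andP[y0 yr] : 0 < y < rho^-1 by exact: hy.
  rewrite !convRE; set T := t%:num; rewrite /unstable.onem.
  have T0 : 0 <= T by rewrite /T ge0.
  have T1 : T <= 1 by rewrite /T le1.
  have T01 : 0 <= T <= 1 by rewrite T0 T1.
  set al' := alpha N1 N2 in al *; set be' := beta N1 N2 in be *.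
  set ta' := tau N1 N2 in ta *.
  pose G (u : R) := u * ln u.
  have Seq : forall u, S N1 N2 u = al'^-1 * G (al' * u / ta')
      + ta' / (N1 * be') * G (be' * u / ta') + G (1 - rho * u).
    move=> u; rewrite /S -/rho -/al' -/be' -/ta' /G.
    by field; rewrite !gt_eqF.
  rewrite !Seq.
  have e1 : al' * (T * x + (1 - T) * y) / ta' = T * (al' * x / ta') + (1 - T) * (al' * y / ta') by ring.
  have e2 : be' * (T * x + (1 - T) * y) / ta' = T * (be' * x / ta') + (1 - T) * (be' * y / ta') by ring.
  have e3 : 1 - rho * (T * x + (1 - T) * y) = T * (1 - rho * x) + (1 - T) * (1 - rho * y) by ring.
  rewrite e1 e2 e3.
  have c1 := xlnx_conv (divr_gt0 (mulr_gt0 al x0) ta) (divr_gt0 (mulr_gt0 al y0) ta) T01.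
  have c2 := xlnx_conv (divr_gt0 (mulr_gt0 be x0) ta) (divr_gt0 (mulr_gt0 be y0) ta) T01.
  have rx : 0 < 1 - rho * x by have := rhox _ xr; lra.
  have ry : 0 < 1 - rho * y by have := rhox _ yr; lra.
  have c3 := xlnx_conv rx ry T01.
  have k1 : 0 <= al'^-1 by rewrite invr_ge0 (ltW al).
  have k2 : 0 <= ta' / (N1 * be') by apply: divr_ge0; [exact: ltW | exact: ltW (mulr_gt0 hN1 be)].
  have := ler_wpM2l k1 c1; have := ler_wpM2l k2 c2.
  rewrite /G; move: c3; rewrite -/(G _).
  lra.
- move=> t x y _ _; rewrite !convRE; set T := t%:num; rewrite /unstable.onem.
  have T0 : 0 <= T by rewrite /T ge0.
  have T1 : T <= 1 by rewrite /T le1.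
  rewrite /H -/rho.
  have h : 0 <= chi * rho * T * (1 - T) * (x - y) ^+ 2.
    apply: mulr_ge0; last exact: sqr_ge0.
    apply: mulr_ge0; last lra. apply: mulr_ge0 => //; apply: mulr_ge0; lra.
  have -> : T * - (chi * x * (1 - rho * x)) + (1 - T) * - (chi * y * (1 - rho * y))
    = - (chi * (T * x + (1 - T) * y) * (1 - rho * (T * x + (1 - T) * y)))
      + chi * rho * T * (1 - T) * (x - y) ^+ 2 by ring.
  by rewrite lerDl.
- move=> t [u1 v1] [u2 v2]; rewrite /D2 !inE /= => -[hu1 _] [hu2 _].
  have /andP[u10 u1r] : 0 < u1 < rho^-1 by exact: hu1.
  have /andP[u20 u2r] : 0 < u2 < rho^-1 by exact: hu2.
  have h1 : 0 < u1 < 1 by rewrite u10 (lt_trans u1r).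
  have h2 : 0 < u2 < 1 by rewrite u20 (lt_trans u2r).
  set T := t%:num.
  have T01 : 0 <= T <= 1 by rewrite /T ge0 le1.
  change (kappa (T * u1 + (1 - T) * u2) * (T * v1 + (1 - T) * v2) ^+ 2 <=
    T * (kappa u1 * v1 ^+ 2) + (1 - T) * (kappa u2 * v2 ^+ 2)).
  rewrite /kappa !(mulrC (_^-1)).
  apply: (quad_conv (w := fun u => 36 * u * (1 - u)) (P := fun u => 0 < u < 1)) => //.
    by move=> u /andP[? ?]; apply: mulr_gt0; lra.
  move=> a b s /andP[? ?] /andP[? ?] /andP[? ?].
  have -> : 36 * (s * a + (1 - s) * b) * (1 - (s * a + (1 - s) * b)) =
    s * (36 * a * (1 - a)) + (1 - s) * (36 * b * (1 - b)) + 36 * s * (1 - s) * (a - b) ^+ 2 by ring.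
  rewrite lerDl; apply: mulr_ge0; last exact: sqr_ge0.
  apply: mulr_ge0; lra.
- move=> t [u1 v1] [u2 v2]; rewrite /D2 !inE /= => -[hu1 _] [hu2 _].
  have /andP[u10 u1r] : 0 < u1 < rho^-1 by exact: hu1.
  have /andP[u20 u2r] : 0 < u2 < rho^-1 by exact: hu2.
  have h1 : 0 < u1 < 1 by rewrite u10 (lt_trans u1r).
  have h2 : 0 < u2 < 1 by rewrite u20 (lt_trans u2r).
  set T := t%:num.
  have T01 : 0 <= T <= 1 by rewrite /T ge0 le1.
  change ((kappa (T * u1 + (1 - T) * u2) - 36^-1) * (T * v1 + (1 - T) * v2) ^+ 2 <=
    T * ((kappa u1 - 36^-1) * v1 ^+ 2) + (1 - T) * ((kappa u2 - 36^-1) * v2 ^+ 2)).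
  rewrite !K1eq //; last exact: conv01.
  apply: (quad_conv (w := fun u => 36 * (psi u - 1)) (P := fun u => 0 < u < 1)) => //.
    by move=> u hu; exact: wK1_pos.
  move=> a b s ha hb hs.
  have := psi_conc ha hb hs; lra.
- move=> t x y _ _; set T := t%:num.
  have T01 : 0 <= T <= 1 by rewrite /T ge0 le1.
  change (36^-1 * (T * x + (1 - T) * y) ^+ 2 <=
    T * (36^-1 * x ^+ 2) + (1 - T) * (36^-1 * y ^+ 2)).
  exact: K2conv.
Qed.
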